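(* Let $a_{11},a_{12},a_{21},a_{22}\in\mathbb{R}$, $\sigma_x,\sigma_y>0$ be fixed with $a_{22}<0$ and $a_{11}a_{22}-a_{12}a_{21}>0$; set $\tilde a:=a_{11}-a_{12}a_{21}/a_{22}$. For $\epsilon>0$ let $A_\epsilon=\begin{pmatrix} a_{11} & a_{12}\\ a_{21}/\epsilon & a_{22}/\epsilon\end{pmatrix}$, $Q=\begin{pmatrix}\sigma_x^2&0\\0&\sigma_y^2/\epsilon\end{pmatrix}$, and for $\epsilon$ small enough let $\Sigma=(\Sigma_{ij})$ be the unique solution of the Lyapunov equation $A_\epsilon\Sigma+\Sigma A_\epsilon^{\top}=-Q$, and let $\lambda_1,\lambda_2$ be the real eigenvalues $\lambda_{1,2}=\frac12\big(a_{11}+\frac{a_{22}}{\epsilon}\pm\sqrt{\Delta}\big)$ with $\Delta=(a_{11}+a_{22}/\epsilon)^2-4a_{22}\tilde a/\epsilon$. Define $$\hat b:=\lambda_1,\qquad \hat\sigma^2:=-2\lambda_1\,\frac{\Sigma_{11}(\lambda_2-a_{11})-\Sigma_{21}a_{12}}{\lambda_2-\lambda_1}.$$ Then, as $\epsilon\to0^+$, $$\hat b=\tilde a-\frac{a_{12}a_{21}\tilde a}{a_{22}^2}\epsilon+O(\epsilon^2),\qquad \hat\sigma^2=\sigma_x^2-\frac{2\sigma_x^2a_{12}a_{21}-\sigma_y^2a_{12}^2}{a_{22}^2}\,\epsilon+O(\epsilon^2).$$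
   Context: $\Sigma$ is the stationary covariance matrix of the two-dimensional Ornstein–Uhlenbeck process $\dot x=a_{11}x+a_{12}y+\sigma_x\dot W_x$, $\dot y=\frac1\epsilon(a_{21}x+a_{22}y)+\frac{\sigma_y}{\sqrt\epsilon}\dot W_y$ with independent standard Wiener processes $W_x,W_y$. *)

(* Defs.v *)
From Stdlib Require Import Reals.
Open Scope R_scope.

Record M2 : Type := mkM2 { m11 : R; m12 : R; m21 : R; m22 : R }.

Definition addM (A B : M2) : M2 :=
  mkM2 (m11 A + m11 B) (m12 A + m12 B) (m21 A + m21 B) (m22 A + m22 B).
Definition oppM (A : M2) : M2 := mkM2 (- m11 A) (- m12 A) (- m21 A) (- m22 A).
Definition mulM (A B : M2) : M2 :=
  mkM2 (m11 A * m11 B + m12 A * m21 B) (m11 A * m12 B + m12 A * m22 B)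
       (m21 A * m11 B + m22 A * m21 B) (m21 A * m12 B + m22 A * m22 B).
Definition trM (A : M2) : M2 := mkM2 (m11 A) (m21 A) (m12 A) (m22 A).

Definition A_eps (a11 a12 a21 a22 eps : R) : M2 :=
  mkM2 a11 a12 (a21 / eps) (a22 / eps).
Definition Q_eps (sx sy eps : R) : M2 := mkM2 (sx ^ 2) 0 0 (sy ^ 2 / eps).

Definition lyapunov (A S Q : M2) : Prop :=
  addM (mulM A S) (mulM S (trM A)) = oppM Q.

Definition atilde (a11 a12 a21 a22 : R) : R := a11 - a12 * a21 / a22.

Definition Delta (a11 a12 a21 a22 eps : R) : R :=
  (a11 + a22 / eps) ^ 2 - 4 * a22 * atilde a11 a12 a21 a22 / eps.

Definition lambda1 (a11 a12 a21 a22 eps : R) : R :=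
  / 2 * (a11 + a22 / eps + sqrt (Delta a11 a12 a21 a22 eps)).
Definition lambda2 (a11 a12 a21 a22 eps : R) : R :=
  / 2 * (a11 + a22 / eps - sqrt (Delta a11 a12 a21 a22 eps)).

Definition bhat (a11 a12 a21 a22 eps : R) : R := lambda1 a11 a12 a21 a22 eps.

Definition sigma2hat (a11 a12 a21 a22 eps : R) (S : M2) : R :=
  let l1 := lambda1 a11 a12 a21 a22 eps in
  let l2 := lambda2 a11 a12 a21 a22 eps in
  - 2 * l1 * ((m11 S * (l2 - a11) - m21 S * a12) / (l2 - l1)).

Definition bigO_eps2 (f : R -> R) : Prop :=
  exists C delta, 0 < delta /\
    forall eps, 0 < eps < delta -> Rabs (f eps) <= C * eps ^ 2.

(* Main.v *)
Require Import Defs.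
From Stdlib Require Import Reals Lra Psatz.
Open Scope R_scope.


Lemma key (a b c d x y p q r s sg k : R) :
  x + y = a + d -> x*y = a*d - b*c ->
  a*p + b*r + (p*a + q*b) = - sg ->
  a*q + b*s + (p*c + q*d) = - 0 ->
  c*p + d*r + (r*a + s*b) = - 0 ->
  c*q + d*s + (r*c + s*d) = - k ->
  (p*(y-a) - r*b) * (2*x*(x+y)) = (x*x - d*d)*sg - b*b*k.
Proof.
  intros H1 H2 E11 E12 E21 E22.
  apply Rminus_diag_eq in H1, H2, E11, E12, E21, E22.
  apply Rminus_diag_uniq.
  transitivity (
   -(x+d)*((x-d)*(a*p + b*r + (p*a + q*b) - - sg) + b*(c*p + d*r + (r*a + s*b) - - 0))
   + b*((x-d)*(a*q + b*s + (p*c + q*d) - - 0) + b*(c*q + d*s + (r*c + s*d) - - k))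
   - p*(-(x + y - (a + d)))*2*x*(x+y)
   + ((x-d)*p + b*r)*(x*(-(x + y - (a + d))) - (x*y - (a*d - b*c)))
   + (x*(-(x + y - (a + d))) + (x*y - (a*d - b*c)))*((x+d)*p - b*q)).
  - ring.
  - rewrite H1, H2, E11, E12, E21, E22. ring.
Qed.

Lemma abs_mul_le X Y A B : Rabs X <= A -> Rabs Y <= B -> Rabs (X*Y) <= A*B.
Proof. intros. rewrite Rabs_mult. apply Rmult_le_compat; auto using Rabs_pos. Qed.
Lemma abs_add_le X Y A B : Rabs X <= A -> Rabs Y <= B -> Rabs (X+Y) <= A+B.
Proof. intros. pose proof (Rabs_triang X Y). lra. Qed.
Lemma abs_sub_le X Y A B : Rabs X <= A -> Rabs Y <= B -> Rabs (X-Y) <= A+B.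
Proof. intros. unfold Rminus. apply abs_add_le; auto. rewrite Rabs_Ropp; auto. Qed.
Lemma neg_abs_le x : - Rabs x <= x.
Proof. unfold Rabs; destruct Rcase_abs; lra. Qed.
Lemma le_abs x : x <= Rabs x.
Proof. unfold Rabs; destruct Rcase_abs; lra. Qed.
Lemma lt_div_mul e X Y : 0 < Y -> e < X / Y -> e * Y < X.
Proof. intros HY H. apply Rmult_lt_compat_r with (r:=Y) in H; auto.
  replace (X/Y*Y) with X in H by (field; lra). exact H. Qed.

Section S.
Variables a11 a12 a21 a22 sx sy e : R.
Hypothesis Hsx : 0 < sx.
Hypothesis Hd : a22 < 0.
Hypothesis Hdet : a11 * a22 - a12 * a21 > 0.
Hypothesis He0 : 0 < e.
Hypothesis He1 : e < 1.
Let atl := atilde a11 a12 a21 a22.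
Let beta := - (a12*a21*atl/a22^2).
Hypothesis Hc1 : e * Rabs a11 <= - a22 / 2.
Hypothesis Hc2 : 32 * (a22 * atl) * e <= a22 ^ 2.
Hypothesis Hc3 : e * (Rabs (atl - a11/2) + Rabs beta) <= - a22 / 4.

Lemma at_prop : a22 * atl = a11*a22 - a12*a21.
Proof. unfold atl, atilde. field. lra. Qed.

Let P := (a11*e + a22)^2 - 4*a22*atl*e.
Lemma P_lb : a22^2/8 <= P.
Proof.
  unfold P. pose proof (Rle_abs a11). pose proof at_prop.
  assert (a11*e + a22 <= a22/2) by nra.
  nra.
Qed.
Lemma Delta_eq : Defs.Delta a11 a12 a21 a22 e = P / e^2.
Proof. unfold Defs.Delta, P. fold atl. field. lra. Qed.
Let s := sqrt (Defs.Delta a11 a12 a21 a22 e).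
Lemma s_sq : s * s = Defs.Delta a11 a12 a21 a22 e.
Proof. unfold s. apply sqrt_sqrt. rewrite Delta_eq. pose proof P_lb.
  unfold Rdiv; apply Rmult_le_pos; [nra | apply Rlt_le, Rinv_0_lt_compat; nra]. Qed.
Lemma es_sq : (e*s)*(e*s) = P.
Proof. replace ((e*s)*(e*s)) with (e^2*(s*s)) by ring. rewrite s_sq, Delta_eq. field. lra. Qed.
Lemma es_lb : - a22 / 3 <= e*s.
Proof. pose proof es_sq. pose proof P_lb. assert (0 <= s) by apply sqrt_pos.
  assert (0 <= e*s) by nra. nra. Qed.
Let u := (a11*e + a22 + e*s)/2.
Let v := (a11*e + a22 - e*s)/2.
Lemma u_eq : u = e * lambda1 a11 a12 a21 a22 e.
Proof. unfold u, lambda1. fold s. field. lra. Qed.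
Lemma v_eq : v = e * lambda2 a11 a12 a21 a22 e.
Proof. unfold v, lambda2. fold s. field. lra. Qed.
Lemma uv_sum : u + v = a11*e + a22.
Proof. unfold u, v. field. Qed.
Lemma uv_prod : u * v = e * a22 * atl.
Proof. unfold u, v. replace ((a11 * e + a22 + e * s) / 2 * ((a11 * e + a22 - e * s) / 2))
  with (((a11 * e + a22)^2 - (e*s)*(e*s))/4) by field. rewrite es_sq. unfold P. field. Qed.
Let ustar := e*atl + beta*e^2.
Let K1 := 4*(Rabs(beta*(2*atl - a11)) + beta^2)/(-a22).
Lemma atl_rel : atl*atl - a11*atl - a22*beta = 0.
Proof. unfold beta, atl, atilde. field. lra. Qed.
Lemma prod_eq : (u - ustar)*(ustar - v) = -(e^3*(beta*(2*atl - a11) + beta^2*e)).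
Proof.
  pose proof uv_sum. pose proof uv_prod. pose proof atl_rel.
  assert (Hv : v = a11*e + a22 - u) by lra.
  assert (Hq : u*u - (a11*e + a22)*u + e*a22*atl = 0). { rewrite <- H0. rewrite Hv. generalize u. intro w. ring. }
  apply Rminus_diag_eq in H1.
  rewrite Hv. unfold ustar.
  transitivity ((u*u - (a11*e + a22)*u + e*a22*atl) - e^2*(atl*atl - a11*atl - a22*beta - 0)
     - (e^3*(beta*(2*atl - a11) + beta^2*e))); [ring|].
  rewrite Hq, H1. ring.
Qed.
Lemma gap : - a22 / 4 <= ustar - v.
Proof.
  unfold ustar, v. pose proof (neg_abs_le (atl - a11/2)). pose proof (neg_abs_le beta).
  assert (0 <= e*s) by (pose proof es_lb; lra).
  assert (e*(atl - a11/2) >= - e * Rabs (atl - a11/2)) by nra.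
  assert (beta*e^2 >= - Rabs beta * e).
  { pose proof (Rabs_pos beta). assert (0 <= (beta + Rabs beta)*e^2) by (apply Rmult_le_pos; nra).
    assert (0 <= Rabs beta * (e - e^2)) by (apply Rmult_le_pos; nra). nra. }
  nra.
Qed.
Lemma u_close : Rabs (u - ustar) <= K1 * e^3.
Proof.
  pose proof prod_eq as H. pose proof gap as G.
  assert (HB : Rabs (beta*(2*atl - a11) + beta^2*e) <= Rabs(beta*(2*atl - a11)) + beta^2).
  { apply abs_add_le; [lra|]. pose proof (pow2_ge_0 beta).
    rewrite Rabs_right; [nra | apply Rle_ge; nra]. }
  assert (HA : Rabs (u - ustar) * (ustar - v) <= e^3 * (Rabs(beta*(2*atl - a11)) + beta^2)).
  { rewrite <- (Rabs_right (ustar - v)) by lra. rewrite <- Rabs_mult, H, Rabs_Ropp, Rabs_mult.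
    rewrite Rabs_right by (apply Rle_ge; apply pow_le; lra).
    apply Rmult_le_compat_l; [apply pow_le; lra| exact HB]. }
  pose proof (Rabs_pos (u - ustar)).
  assert (HC: Rabs (u - ustar) * (-a22) <= 4 * e^3 * (Rabs(beta*(2*atl - a11)) + beta^2)) by nra.
  unfold K1. apply Rmult_le_reg_r with (r := -a22); [lra|].
  replace (4 * (Rabs (beta * (2 * atl - a11)) + beta ^ 2) / - a22 * e ^ 3 * - a22)
    with (4 * e^3 * (Rabs(beta*(2*atl - a11)) + beta^2)) by (field; lra).
  exact HC.
Qed.
Lemma part1 : Rabs (bhat a11 a12 a21 a22 e - (atilde a11 a12 a21 a22
        - a12 * a21 * atilde a11 a12 a21 a22 / a22 ^ 2 * e)) <= K1 * e^2.
Proof.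
  fold atl. unfold bhat.
  replace (lambda1 a11 a12 a21 a22 e - (atl - a12 * a21 * atl / a22 ^ 2 * e))
    with ((u - ustar) / e).
  2:{ rewrite u_eq. unfold ustar, beta. field. lra. }
  unfold Rdiv. rewrite Rabs_mult, Rabs_Rinv by lra. rewrite (Rabs_right e) by lra.
  pose proof u_close. apply Rmult_le_reg_r with (r := e); [lra|].
  rewrite Rmult_assoc, Rinv_l by lra. nra.
Qed.
Let h1 := -(2*sx^2*a12*a21 - sy^2*a12^2)/a22^2.
Let h := sx^2 + h1*e.
Let c0 := -sx^2*(a11-atl)^2 + 2*a22*h1*(atl - a11).
Let c1 := h1*a11*(2*atl - a11).
Let Mb := (2*Rabs atl + K1 + Rabs beta)*sx^2 + 2*(sx^2 + Rabs h1)*(Rabs a11 + Rabs a22).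
Let Nb := Rabs c0 + Rabs c1 + (K1 + Rabs beta)*Mb.
Let C2 := 6*Nb/a22^2.

Lemma sig_eq (S : M2) :
  lyapunov (A_eps a11 a12 a21 a22 e) S (Q_eps sx sy e) ->
  sigma2hat a11 a12 a21 a22 e S * ((v-u)*(v+u)) = (a22^2 - u^2)*sx^2 + a12^2*sy^2*e.
Proof.
  intro H. destruct S as [p q r s0].
  unfold lyapunov, A_eps, Q_eps, addM, mulM, trM, oppM in H.
  pose proof (f_equal m11 H) as E11. pose proof (f_equal m12 H) as E12.
  pose proof (f_equal m21 H) as E21. pose proof (f_equal m22 H) as E22.
  cbn [m11 m12 m21 m22] in E11, E12, E21, E22.
  set (x := lambda1 a11 a12 a21 a22 e). set (y := lambda2 a11 a12 a21 a22 e).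
  assert (Hux : u = e*x) by exact u_eq. assert (Hvy : v = e*y) by exact v_eq.
  assert (Hsum : x + y = a11 + a22/e).
  { pose proof uv_sum. apply Rmult_eq_reg_l with (r:=e); [|lra].
    replace (e*(x+y)) with (u+v) by (rewrite Hux, Hvy; ring). rewrite H0. field. lra. }
  assert (Hprod : x * y = a11*(a22/e) - a12*(a21/e)).
  { pose proof uv_prod. pose proof at_prop. apply Rmult_eq_reg_l with (r:=e^2); [|nra].
    replace (e^2*(x*y)) with (u*v) by (rewrite Hux, Hvy; ring). rewrite H0.
    replace (e * a22 * atl) with (e*(a22*atl)) by ring. rewrite H1. field. lra. }
  pose proof (key _ _ _ _ _ _ _ _ _ _ _ _ Hsum Hprod E11 E12 E21 E22) as K.
  assert (Hs : 0 < s) by (pose proof es_lb; nra).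
  assert (Hyx : y - x = - s).
  { apply Rmult_eq_reg_l with (r:=e); [|lra].
    replace (e*(y-x)) with (v - u) by (rewrite Hux, Hvy; ring). unfold u, v. field. }
  unfold sigma2hat. fold x y. simpl m11. simpl m21.
  rewrite Hux, Hvy.
  replace (- 2 * x * ((p * (y - a11) - r * a12) / (y - x)) * ((e * y - e * x) * (e * y + e * x)))
    with (- e^2 * ((p * (y - a11) - r * a12) * (2 * x * (x + y)))) by (field; lra).
  rewrite K. field. lra.
Qed.

Lemma n_identity :
  (a22^2 - u^2)*sx^2 + a12^2*sy^2*e - h*((a11*e + a22 - 2*u)*(a11*e+a22))
  = e^2*(c0 + c1*e) + (u - atl*e)*(-(u + atl*e)*sx^2 + 2*h*(a11*e + a22)).
Proof.
  unfold c0, c1, h, h1, atl, atilde. clearbody u. field. lra.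
Qed.

Lemma part2 (S : M2) :
  lyapunov (A_eps a11 a12 a21 a22 e) S (Q_eps sx sy e) ->
  Rabs (sigma2hat a11 a12 a21 a22 e S
     - (sx ^ 2 - (2 * sx ^ 2 * a12 * a21 - sy ^ 2 * a12 ^ 2) / a22 ^ 2 * e)) <= C2 * e^2.
Proof.
  intro H. pose proof (sig_eq S H) as Hs.
  set (sig := sigma2hat a11 a12 a21 a22 e S) in *.
  assert (Hvu : v - u = - (e*s)) by (unfold u, v; field).
  assert (Hvu2 : v + u = a11*e + a22) by (unfold u, v; field).
  assert (Hv : v = a11*e + a22 - u) by (unfold u, v; field).
  pose proof es_lb as Hes. pose proof (Rle_abs a11).
  assert (Hl : a11*e + a22 <= a22/2) by nra.
  set (Den := (v-u)*(v+u)) in *.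
  assert (HDen : a22^2/6 <= Den).
  { unfold Den. rewrite Hvu, Hvu2. nra. }
  assert (Hn : sig - h = ((a22^2 - u^2)*sx^2 + a12^2*sy^2*e - h*((a11*e + a22 - 2*u)*(a11*e+a22)))/Den).
  { replace ((a11*e + a22 - 2*u)*(a11*e+a22)) with Den by (unfold Den; rewrite Hv; ring).
    rewrite <- Hs. field. nra. }
  replace (sx ^ 2 - (2 * sx ^ 2 * a12 * a21 - sy ^ 2 * a12 ^ 2) / a22 ^ 2 * e) with h
    by (unfold h, h1; field; lra).
  rewrite Hn, n_identity.
  pose proof u_close as Huc.
  assert (HK1 : 0 <= K1).
  { unfold K1. pose proof (Rabs_pos (beta * (2 * atl - a11))). pose proof (pow2_ge_0 beta).
    unfold Rdiv. apply Rmult_le_pos; [lra| apply Rlt_le, Rinv_0_lt_compat; lra]. }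
  assert (Hee : e^2 <= e) by nra. assert (He3 : e^3 <= e^2) by nra.
  assert (He2p : 0 <= e^2) by nra.
  assert (Hua : Rabs (u - atl*e) <= (K1 + Rabs beta)*e^2).
  { replace (u - atl*e) with ((u - ustar) + beta*e^2) by (unfold ustar; ring).
    apply Rle_trans with (K1*e^3 + Rabs beta * e^2).
    - apply abs_add_le; [exact Huc|]. rewrite Rabs_mult, (Rabs_right (e^2)) by nra. lra.
    - nra. }
  assert (Habs_e : Rabs e = e) by (apply Rabs_right; lra).
  assert (Hu : Rabs u <= Rabs atl + K1 + Rabs beta).
  { replace u with (atl*e + (u - atl*e)) by ring.
    apply Rle_trans with (Rabs atl * 1 + (K1 + Rabs beta)*1); [|lra].
    apply abs_add_le.
    - rewrite Rabs_mult, Habs_e. pose proof (Rabs_pos atl). nra.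
    - pose proof (Rabs_pos beta). nra. }
  assert (Hh : Rabs h <= sx^2 + Rabs h1).
  { unfold h. apply abs_add_le.
    - rewrite Rabs_right; [lra | apply Rle_ge, pow2_ge_0].
    - rewrite Rabs_mult, Habs_e. pose proof (Rabs_pos h1). nra. }
  assert (Hlin : Rabs (a11*e + a22) <= Rabs a11 + Rabs a22).
  { apply abs_add_le; [|lra]. rewrite Rabs_mult, Habs_e. pose proof (Rabs_pos a11). nra. }
  assert (HM : Rabs (-(u + atl*e)*sx^2 + 2*h*(a11*e + a22)) <= Mb).
  { unfold Mb. apply abs_add_le.
    - replace (-(u + atl*e)*sx^2) with ((-(u+atl*e))*sx^2) by ring.
      apply abs_mul_le; [| rewrite Rabs_right; [lra | apply Rle_ge, pow2_ge_0]].
      rewrite Rabs_Ropp. apply Rle_trans with ((Rabs atl + K1 + Rabs beta) + Rabs atl * 1).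
      + apply abs_add_le; [exact Hu|]. rewrite Rabs_mult, Habs_e. pose proof (Rabs_pos atl). nra.
      + lra.
    - replace (2*h*(a11*e + a22)) with (2*(h*(a11*e + a22))) by ring.
      rewrite Rabs_mult, (Rabs_right 2) by lra.
      rewrite (Rmult_assoc 2). apply Rmult_le_compat_l; [lra|]. apply abs_mul_le; assumption. }
  assert (HN : Rabs (e^2*(c0 + c1*e) + (u - atl*e)*(-(u + atl*e)*sx^2 + 2*h*(a11*e + a22)))
               <= Nb * e^2).
  { unfold Nb. apply Rle_trans with (e^2*(Rabs c0 + Rabs c1) + ((K1 + Rabs beta)*e^2)*Mb).
    - apply abs_add_le.
      + rewrite Rabs_mult, (Rabs_right (e^2)) by nra. apply Rmult_le_compat_l; [lra|].
        apply abs_add_le; [lra|]. rewrite Rabs_mult, Habs_e. pose proof (Rabs_pos c1). nra.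
      + apply abs_mul_le; assumption.
    - nra. }
  assert (HNb : 0 <= Nb).
  { pose proof (Rabs_pos (e^2*(c0 + c1*e) + (u - atl*e)*(-(u + atl*e)*sx^2 + 2*h*(a11*e + a22)))).
    assert (0 < e^2) by nra. destruct (Rle_lt_dec 0 Nb); auto.
    assert (Nb * e^2 < 0) by (apply Rmult_neg_pos; auto). lra. }
  unfold Rdiv. rewrite Rabs_mult, Rabs_inv, (Rabs_right Den) by nra.
  assert (0 < a22^2) by nra.
  apply Rle_trans with (Nb * e^2 * / Den).
  - apply Rmult_le_compat_r; [apply Rlt_le, Rinv_0_lt_compat; nra | exact HN].
  - unfold C2. apply Rmult_le_reg_r with (r := Den); [nra|].
    rewrite Rmult_assoc, Rinv_l by nra.
    replace (6 * Nb / a22 ^ 2 * e ^ 2 * Den) with (Nb*e^2 * (6*Den/a22^2)) by (field; lra).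
    assert (1 <= 6*Den/a22^2).
    { apply Rmult_le_reg_r with (r := a22^2); [lra|]. replace (6*Den/a22^2*a22^2) with (6*Den) by (field; lra). lra. }
    apply Rmult_le_compat_l; [apply Rmult_le_pos; lra | lra].
Qed.
End S.

Theorem mainTheorem2 (a11 a12 a21 a22 sx sy : R) (Sig : R -> M2) :
  0 < sx -> 0 < sy -> a22 < 0 -> a11 * a22 - a12 * a21 > 0 ->
  (exists eps0, 0 < eps0 /\ forall eps, 0 < eps < eps0 ->
     lyapunov (A_eps a11 a12 a21 a22 eps) (Sig eps) (Q_eps sx sy eps)) ->
  bigO_eps2 (fun eps => bhat a11 a12 a21 a22 eps
     - (atilde a11 a12 a21 a22
        - a12 * a21 * atilde a11 a12 a21 a22 / a22 ^ 2 * eps)) /\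
  bigO_eps2 (fun eps => sigma2hat a11 a12 a21 a22 eps (Sig eps)
     - (sx ^ 2 - (2 * sx ^ 2 * a12 * a21 - sy ^ 2 * a12 ^ 2) / a22 ^ 2 * eps)).
Proof.
  intros Hsx Hsy Hd Hdet [eps0 [Heps0 Hly]].
  pose (atl := atilde a11 a12 a21 a22).
  pose (beta := - (a12*a21*atl/a22^2)).
  assert (Hatp : 0 < a22 * atl) by (unfold atl, atilde; field_simplify; [lra | lra]).
  pose (d1 := -a22/(4*(Rabs (atl - a11/2) + Rabs beta + 1))).
  pose (d2 := -a22/(2*(Rabs a11 + 1))).
  pose (d3 := a22^2/(32*(a22*atl)+1)).
  pose (delta := Rmin eps0 (Rmin 1 (Rmin d1 (Rmin d2 d3)))).
  pose proof (Rabs_pos (atl - a11/2)). pose proof (Rabs_pos beta). pose proof (Rabs_pos a11).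
  assert (Hd1 : 0 < d1) by (unfold d1; apply Rdiv_lt_0_compat; lra).
  assert (Hd2 : 0 < d2) by (unfold d2; apply Rdiv_lt_0_compat; lra).
  assert (Hd3 : 0 < d3) by (unfold d3; apply Rdiv_lt_0_compat; nra).
  assert (Hdel : 0 < delta) by (unfold delta; repeat apply Rmin_pos; lra).
  assert (Hconds : forall e, 0 < e < delta ->
    e < eps0 /\ e < 1 /\ e * Rabs a11 <= - a22 / 2 /\ 32 * (a22 * atl) * e <= a22 ^ 2 /\
    e * (Rabs (atl - a11/2) + Rabs beta) <= - a22 / 4).
  { intros e [He0 He].
    assert (L0 : e < eps0) by (eapply Rlt_le_trans; [exact He| apply Rmin_l]).
    assert (L1 : e < 1) by (eapply Rlt_le_trans; [exact He| unfold delta; eapply Rle_trans; [apply Rmin_r | apply Rmin_l]]).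
    assert (Le1 : e < d1) by (eapply Rlt_le_trans; [exact He| unfold delta; eapply Rle_trans; [apply Rmin_r | eapply Rle_trans; [apply Rmin_r | apply Rmin_l]]]).
    assert (Le2 : e < d2) by (eapply Rlt_le_trans; [exact He| unfold delta; eapply Rle_trans; [apply Rmin_r | eapply Rle_trans; [apply Rmin_r | eapply Rle_trans; [apply Rmin_r | apply Rmin_l]]]]).
    assert (Le3 : e < d3) by (eapply Rlt_le_trans; [exact He| unfold delta; eapply Rle_trans; [apply Rmin_r | eapply Rle_trans; [apply Rmin_r | eapply Rle_trans; [apply Rmin_r | apply Rmin_r]]]]).
    apply lt_div_mul in Le1; [|lra]. apply lt_div_mul in Le2; [|lra]. apply lt_div_mul in Le3; [|lra].
    repeat split; try lra; nra. }
  split.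
  - eexists. exists delta. split; [exact Hdel|]. intros e He.
    destruct (Hconds e He) as (L0 & L1 & C1 & C2 & C3).
    apply (part1 a11 a12 a21 a22 e Hd (proj1 He) L1 C1 C2 C3).
  - eexists. exists delta. split; [exact Hdel|]. intros e He.
    destruct (Hconds e He) as (L0 & L1 & C1 & C2 & C3).
    apply (part2 a11 a12 a21 a22 sx sy e Hd (proj1 He) L1 C1 C2 C3).
    apply Hly. lra.
Qed.
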